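(* Let $S$ be a finite $p$-group and $\mathcal{A}$ a divisible $S$-algebra with an $(S,S)$-invariant $\mathcal{O}$-basis $Y\subseteq\mathcal{A}^\times$. Then $Y$ is $\mathfrak{F}_S(\mathcal{A})$-stable: for every $P\le S$ and every $\varphi\in\mathrm{Hom}_{\mathfrak{F}_S(\mathcal{A})}(P,S)$, ${}^\varphi_PY_S\cong{}_PY_S$ as $(P,S)$-bisets.
   Context: $\mathcal{O}$ is a complete local noetherian domain with maximal ideal $\mathfrak{m}$ and algebraically closed residue field of characteristic $p$. An interior $S$-algebra is an $\mathcal{O}$-free finite-rank $\mathcal{O}$-algebra $\mathcal{A}$ with a group homomorphism $S\to\mathcal{A}^\times$; $S\times S$ acts by $(s,t)a=sat^{-1}$. It is bifree if it has an $\mathcal{O}$-basis $Y$ with $sY=Y=Ys$ for $s\in S$ ($(S,S)$-invariant basis) on which left and right actions are free. For $U\le S\times S$, $\mathcal{A}(U)=\mathcal{A}^U/(\mathfrak{m}\mathcal{A}^U+\sum_{V<U}\mathrm{tr}_V^U\mathcal{A}^V)$; for injective $\varphi:P\to S$, $\mathcal{A}(\varphi)=\mathcal{A}(\Delta(\varphi,P))$, $\Delta(\varphi,P)=\{(\varphi(p),p)\}$. $\mathfrak{F}_S(\mathcal{A})$ has objects the subgroups of $S$ and $\mathrm{Hom}(P,Q)=\{\varphi:P\to Q$ injective$:\mathcal{A}(\varphi)\ne0\}$. A bifree $S$-algebra is divisible if $\mathfrak{F}_S(\mathcal{A})$ contains all inclusions, is closed under composition, and every morphism is an inclusion composed with a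 group isomorphism onto its image that is an isomorphism in $\mathfrak{F}_S(\mathcal{A})$. ${}_PY_S$ is $Y$ with left action restricted to $P$; ${}^\varphi_PY_S$ is $Y$ with action $p\odot y\odot s=\varphi(p)ys$. *)

(* Defs.v *)
From HB Require Import structures.
From mathcomp Require Import all_boot all_order all_algebra all_fingroup all_solvable.
Set Implicit Arguments. Unset Strict Implicit. Unset Printing Implicit Defensive.
Import GRing.Theory.
Local Open Scope ring_scope.

Section CoeffRing.
Variable O : idomainType.

(* the maximal ideal m of the local ring O: the non-units *)
Definition mO : {pred O} := [pred x : O | x \isn't a GRing.unit].

Definition is_local : Prop :=
  (forall x y : O, x \in mO -> y \in mO -> x + y \in mO) /\
  (forall x y : O, y \in mO -> x * y \in mO).

Definition is_ideal (I : O -> Prop) : Prop :=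
  I 0 /\ (forall x y, I x -> I y -> I (x + y)) /\ (forall x y, I y -> I (x * y)).

Definition is_noetherian : Prop :=
  forall I : O -> Prop, is_ideal I ->
  exists gens : seq O, forall x, I x <->
    exists c : O -> O, x = \sum_(g <- gens) c g * g.

Fixpoint mpow (n : nat) : O -> Prop :=
  match n with
  | 0 => fun _ => True
  | n'.+1 => fun x => exists s : seq (O * O),
      (forall ab, ab \in s -> ab.1 \in mO /\ mpow n' ab.2) /\
      x = \sum_(ab <- s) ab.1 * ab.2
  end.

(* m-adically separated and complete *)
Definition is_complete : Prop :=
  (forall x : O, (forall n, mpow n x) -> x = 0) /\
  (forall u : nat -> O, (forall n, mpow n (u n.+1 - u n)) ->
     exists l : O, forall n, mpow n (l - u n)).

(* the residue field O/m is algebraically closed *)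
Definition residue_alg_closed : Prop :=
  forall q : {poly O}, (1 < size q)%N -> lead_coef q \is a GRing.unit ->
  exists a : O, q.[a] \in mO.

(* the residue field has characteristic p *)
Definition residue_char (p : nat) : Prop := prime p /\ (p%:R : O) \in mO.

Definition standing_O (p : nat) : Prop :=
  [/\ is_local, is_noetherian, is_complete, residue_alg_closed & residue_char p].
End CoeffRing.

Section InteriorAlg.
Variables (O : idomainType) (A : algType O) (gT : finGroupType).
Variables (S : {group gT}) (sigma : gT -> A).

Definition isunitA (a : A) : Prop := exists b : A, a * b = 1 /\ b * a = 1.

Definition interior_hom : Prop :=
  sigma 1%g = 1 /\ {in S &, forall x y, sigma (x * y)%g = sigma x * sigma y}.

Definition is_basis (Y : seq A) : Prop :=
  uniq Y /\
  (forall a : A, exists c : A -> O, a = \sum_(y <- Y) c y *: y) /\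
  (forall c : A -> O, \sum_(y <- Y) c y *: y = 0 -> {in Y, forall y, c y = 0}).

Definition SS_invariant (Y : seq A) : Prop :=
  forall s, s \in S -> perm_eq [seq sigma s * y | y <- Y] Y /\
                       perm_eq [seq y * sigma s | y <- Y] Y.

Definition bifree : Prop :=
  exists Y : seq A, [/\ is_basis Y, SS_invariant Y,
    (forall s y, s \in S -> y \in Y -> sigma s * y = y -> s = 1%g) &
    (forall s y, s \in S -> y \in Y -> y * sigma s = y -> s = 1%g)].

Definition act2 (u : gT * gT) (a : A) : A := sigma u.1 * a * sigma (u.2)^-1%g.

Definition fixedby (U : {set gT * gT}) (a : A) : Prop :=
  forall u, u \in U -> act2 u a = a.

Definition trace (V U : {set gT * gT}) (a : A) : A :=
  \sum_(C in lcosets V U) act2 (repr C) a.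

(* a lies in  m A^U + sum_{V<U} tr_V^U A^V *)
Definition in_brauer_kernel (U : {set gT * gT}) (x : A) : Prop :=
  exists (s : seq (O * A)) (b : {group gT * gT} -> A),
    [/\ (forall ca, ca \in s -> ca.1 \in @mO O /\ fixedby U ca.2),
        (forall V : {group gT * gT}, V \proper U -> fixedby V (b V)) &
        x = \sum_(ca <- s) ca.1 *: ca.2
            + \sum_(V : {group gT * gT} | V \proper U) trace V U (b V)].

(* A(U) <> 0 *)
Definition brauer_nz (U : {set gT * gT}) : Prop :=
  exists a : A, fixedby U a /\ ~ in_brauer_kernel U a.

Definition Delta (f : gT -> gT) (P : {set gT}) : {set gT * gT} :=
  [set (f x, x) | x in P].

Definition Fhom (P Q : {set gT}) (f : gT -> gT) : Prop :=
  [/\ {in P &, {morph f : x y / (x * y)%g}}, {in P &, injective f},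
      f @: P \subset Q & brauer_nz (Delta f P)].

Definition divisible : Prop :=
  [/\ bifree,
      (forall P Q : {group gT}, P \subset Q -> Q \subset S -> Fhom P Q id),
      (forall (P Q R : {group gT}) (f g : gT -> gT),
          P \subset S -> Q \subset S -> R \subset S ->
          Fhom P Q f -> Fhom Q R g -> Fhom P R (g \o f)) &
      (forall (P Q : {group gT}) (f : gT -> gT),
          P \subset S -> Q \subset S -> Fhom P Q f ->
          Fhom P (f @: P) f /\
          exists g : gT -> gT, [/\ Fhom (f @: P) P g,
             {in P, cancel f g} & {in f @: P, cancel g f}])].
End InteriorAlg.

(* Main.v *)
Require Import Defs.
From HB Require Import structures.
From mathcomp Require Import all_boot all_order all_algebra all_fingroup all_solvable.
From Stdlib Require Import ClassicalEpsilon.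
Import GRing.Theory.

Set Implicit Arguments. Unset Strict Implicit. Unset Printing Implicit Defensive.

Section Marks.
Local Open Scope group_scope.
Variables (aT : finGroupType) (D : {group aT}) (T : finType).
Variable G : {group aT}.
Hypothesis sGD : G \subset D.

Lemma act_eq_stab (to : action D T) x g g' : g \in G -> g' \in G ->
  (to x g == to x g') = ((g * g'^-1)%g \in 'C_G[x | to]).
Proof.
move=> gG g'G.
have gD := subsetP sGD _ gG; have g'D := subsetP sGD _ g'G.
have Gm : (g * g'^-1)%g \in G by rewrite groupM ?groupV.
have Dm : (g * g'^-1)%g \in D by rewrite groupM ?groupV.
rewrite !inE Gm /= Dm /= sub1set inE actMin ?groupV //.
apply/eqP/eqP => [->|E]; first by rewrite actKin.
apply: (act_inj to g'^-1); rewrite E actKin //.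
Qed.

Lemma one_side (toA toB : action D T) (DA DB : {set T}) x :
  x \in DA -> (forall y, y \in DB -> #|'C_G[y | toB]| <= #|'C_G[x | toA]|) ->
  #|'Fix_(DA | toA)('C_G[x | toA])| = #|'Fix_(DB | toB)('C_G[x | toA])| ->
  exists2 y, y \in DB & 'C_G[y | toB] = 'C_G[x | toA].
Proof.
move=> xA Hmax Hc.
have xF : x \in 'Fix_(DA | toA)('C_G[x | toA]).
  rewrite inE xA /=; apply/afixP => a; rewrite !inE sub1set inE.
  by case/and3P => _ _ /eqP.
have : 0 < #|'Fix_(DB | toB)('C_G[x | toA])| by rewrite -Hc; apply/card_gt0P; exists x.
case/card_gt0P => y; rewrite inE => /andP[yB /afixP yF].
exists y => //; apply/esym/eqP; rewrite eqEcard Hmax // andbT.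
apply/subsetP => a aC; have := aC; rewrite !inE => /and3P[aG aD _].
by rewrite aG aD sub1set inE (yF a aC) eqxx.
Qed.

Lemma ex_maxn_in (A : {set T}) (F : T -> nat) : A != set0 ->
  exists2 x, x \in A & forall y, y \in A -> F y <= F x.
Proof.
case/set0Pn => x0 Ax0; case: (arg_maxnP F Ax0) => x Ax Hx; exists x => //.
Qed.

Variables to1 to2 : action D T.

Section Orb.
Variables x1 x2 : T.
Hypothesis Ceq : 'C_G[x1 | to1] = 'C_G[x2 | to2].

Lemma eqact g g' : g \in G -> g' \in G ->
  (to2 x2 g == to2 x2 g') = (to1 x1 g == to1 x1 g').
Proof. by move=> gG g'G; rewrite !act_eq_stab // Ceq. Qed.

Definition bo y := to1 x1 (odflt 1 [pick g in G | to2 x2 g == y]).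

Lemma bo_act g : g \in G -> bo (to2 x2 g) = to1 x1 g.
Proof.
move=> gG; rewrite /bo; case: pickP => [g' /andP[g'G /eqP E]|/(_ g)]; last by rewrite gG eqxx.
by apply/eqP; rewrite -eqact // E.
Qed.

Lemma bo_orbit y : y \in orbit to2 G x2 -> bo y \in orbit to1 G x1.
Proof. by case/imsetP => g gG ->; rewrite bo_act // mem_orbit. Qed.

Lemma bo_inj : {in orbit to2 G x2 &, injective bo}.
Proof.
move=> _ _ /imsetP[g gG ->] /imsetP[g' g'G ->]; rewrite !bo_act // => E.
by apply/eqP; rewrite eqact // E.
Qed.

Lemma bo_equiv y h : y \in orbit to2 G x2 -> h \in G -> bo (to2 y h) = to1 (bo y) h.
Proof.
case/imsetP => g gG -> hG.
have gD := subsetP sGD _ gG; have hD := subsetP sGD _ hG.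
by rewrite -actMin // !bo_act ?groupM // actMin.
Qed.

Lemma bo_fix (H : {set aT}) : H \subset G ->
  #|'Fix_(orbit to1 G x1 | to1)(H)| = #|'Fix_(orbit to2 G x2 | to2)(H)|.
Proof.
move=> sHG.
have -> : 'Fix_(orbit to1 G x1 | to1)(H) = bo @: 'Fix_(orbit to2 G x2 | to2)(H).
  apply/setP => z; apply/idP/idP.
    rewrite inE => /andP[/imsetP[g gG ->] /afixP Fz].
    apply/imsetP; exists (to2 x2 g); last by rewrite bo_act.
    rewrite inE mem_orbit //=; apply/afixP => h hH.
    have hG := subsetP sHG _ hH.
    have gD := subsetP sGD _ gG; have hD := subsetP sGD _ hG.
    apply/eqP; rewrite -actMin // eqact ?groupM // actMin //; apply/eqP; exact: Fz.
  case/imsetP => y; rewrite inE => /andP[/imsetP[g gG ->] /afixP Fy] ->.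
  rewrite inE bo_act // mem_orbit //=; apply/afixP => h hH.
  have hG := subsetP sHG _ hH.
  have gD := subsetP sGD _ gG; have hD := subsetP sGD _ hG.
  apply/eqP; rewrite -actMin // -eqact ?groupM // actMin //; apply/eqP; exact: Fy.
rewrite card_in_imset //; apply: sub_in2 bo_inj => y; rewrite inE; by case/andP.
Qed.
End Orb.

Lemma fix_split (to : action D T) (D1 O1 : {set T}) (H : {set aT}) : O1 \subset D1 ->
  #|'Fix_(D1 | to)(H)| = #|'Fix_(D1 :\: O1 | to)(H)| + #|'Fix_(O1 | to)(H)|.
Proof.
move=> sOD; rewrite -(cardsID O1 ('Fix_(D1 | to)(H))) addnC; congr (_ + _); apply: eq_card => y;
rewrite !(in_setI, in_setD); have := subsetP sOD y;
case: (y \in O1) (y \in D1) (y \in 'Fix_to(H)) => [] [] [] //=; by move/(_ isT).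
Qed.

Lemma marks_ind n : forall D1 D2 : {set T}, #|D1| <= n ->
  [acts G, on D1 | to1] -> [acts G, on D2 | to2] ->
  (forall H : {group aT}, H \subset G -> #|'Fix_(D1 | to1)(H)| = #|'Fix_(D2 | to2)(H)|) ->
  exists beta : T -> T, [/\ {in D2, forall x, beta x \in D1}, {in D2 &, injective beta} &
     forall x g, x \in D2 -> g \in G -> beta (to2 x g) = to1 (beta x) g].
Proof.
elim: n => [|n IH] D1 D2 cD1 aD1 aD2 Hm.
  have c2 : #|D2| = 0.
    have := Hm 1%G (sub1G G); rewrite !afix1 !setIT => <-; by move: cD1; rewrite leqn0 => /eqP.
  exists id; split => x; by rewrite (card0_eq c2).
have [D10|D1n0] := eqVneq D1 set0.
  have c2 : #|D2| = 0.
    have := Hm 1%G (sub1G G); rewrite !afix1 !setIT => <-; by rewrite D10 cards0.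
  exists id; split => x; by rewrite (card0_eq c2).
have D2n0 : D2 != set0.
  apply/set0Pn; apply/card_gt0P; have := Hm 1%G (sub1G G); rewrite !afix1 !setIT => <-.
  by apply/card_gt0P/set0Pn.
case: (ex_maxn_in (fun y => #|'C_G[y | to1]|) D1n0) => m1 m1D M1.
case: (ex_maxn_in (fun y => #|'C_G[y | to2]|) D2n0) => m2 m2D M2.
have [x1 [x2 [x1D x2D Ceq]]] : exists x1 x2, [/\ x1 \in D1, x2 \in D2 & 'C_G[x1 | to1] = 'C_G[x2 | to2]].
  case: (leqP #|'C_G[m2 | to2]| #|'C_G[m1 | to1]|) => Hle.
    case: (@one_side to1 to2 D1 D2 m1 m1D).
    - by move=> y yD; apply: leq_trans (M2 _ yD) Hle.
    - exact: (Hm ('C_G[m1 | to1])%G (subsetIl _ _)).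
    by move=> y yD E; exists m1, y.
  case: (@one_side to2 to1 D2 D1 m2 m2D).
  - by move=> y yD; apply: leq_trans (M1 _ yD) (ltnW Hle).
  - by rewrite (Hm ('C_G[m2 | to2])%G (subsetIl _ _)).
  by move=> y yD E; exists y, m2.
set O1 := orbit to1 G x1; set O2 := orbit to2 G x2.
have sO1 : O1 \subset D1 by rewrite acts_sub_orbit.
have sO2 : O2 \subset D2 by rewrite acts_sub_orbit.
have aO1 : [acts G, on O1 | to1] by apply: acts_orbit.
have aO2 : [acts G, on O2 | to2] by apply: acts_orbit.
have [beta' [b1 b2 b3]] : exists beta : T -> T, [/\ {in D2 :\: O2, forall x, beta x \in D1 :\: O1},
    {in D2 :\: O2 &, injective beta} &
     forall x g, x \in D2 :\: O2 -> g \in G -> beta (to2 x g) = to1 (beta x) g].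
  apply: IH; first 1 last.
  - exact: actsD.
  - exact: actsD.
  - move=> H sHG; have := Hm H sHG; rewrite (fix_split _ _ sO1) (fix_split _ _ sO2).
    by rewrite (bo_fix Ceq) //; move/addIn.
  rewrite -ltnS; apply: leq_trans cD1; rewrite -(cardsID O1 D1) (setIidPr sO1) addnC -{1}[#|D1 :\: O1|]addn0 ltn_add2l.
  by apply/card_gt0P; exists x1; apply: orbit_refl.
exists (fun y => if y \in O2 then bo x1 x2 y else beta' y); split.
- move=> y yD; case: ifP => yO; first by apply: (subsetP sO1); exact: bo_orbit.
  by have := b1 y; rewrite !inE yO yD => /(_ isT) /andP[].
- move=> y y' yD y'D /=.
  case: ifP => yO; case: ifP => y'O.
  + exact: bo_inj.
  + move=> E; have := b1 y'; rewrite !inE y'O y'D => /(_ isT) /andP[]; rewrite -E.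
    by rewrite (bo_orbit Ceq).
  + move=> E; have := b1 y; rewrite !inE yO yD => /(_ isT) /andP[]; rewrite E.
    by rewrite (bo_orbit Ceq).
  + by apply: b2; rewrite inE ?yO ?y'O.
- move=> y g yD gG.
  have := acts_act aO2 gG y; rewrite /= => ->.
  case: ifP => yO; first exact: bo_equiv.
  by apply: b3; rewrite // inE yO.
Qed.

Lemma marks_iso :
  (forall H : {group aT}, H \subset G -> #|'Fix_to1(H)| = #|'Fix_to2(H)|) ->
  exists beta : T -> T, injective beta /\
     forall x g, g \in G -> beta (to2 x g) = to1 (beta x) g.
Proof.
move=> Hm.
have aT1 : forall to : action D T, [acts G, on setT | to].
  move=> to; apply/subsetP => a aG; rewrite !inE (subsetP sGD _ aG) /=.
  by apply/subsetP => y; rewrite !inE.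
case: (@marks_ind #|[set: T]| setT setT (leqnn _) (aT1 to1) (aT1 to2)).
  by move=> H sHG; rewrite !setTI; exact: Hm.
move=> beta [_ b2 b3]; exists beta; split.
  by move=> y y'; apply: b2; rewrite inE.
by move=> x g gG; apply: b3; rewrite ?inE.
Qed.
End Marks.

Section SeqSub.
Variables (V : choiceType) (Y : seq V).
Hypothesis uY : uniq Y.
Local Notation T := (seq_sub Y).

Lemma map_val_enumT : map val (enum {: T}) = Y.
Proof. by rewrite enumT unlock val_seq_sub_enum. Qed.

Lemma sum_seq_sub (R : nmodType) (F : V -> R) :
  (\sum_(t : T) F (val t) = \sum_(y <- Y) F y)%R.
Proof. by rewrite -[in RHS]map_val_enumT big_map enumT /index_enum unlock. Qed.
End SeqSub.

Section Coord.
Variables (O : idomainType) (A : algType O) (Y : seq A).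
Hypothesis Hbas : is_basis Y.
Local Open Scope ring_scope.

Definition crd (y a : A) : O :=
  proj1_sig (constructive_indefinite_description _ (proj1 (proj2 Hbas) a)) y.

Lemma crdE a : a = \sum_(y <- Y) crd y a *: y.
Proof. rewrite /crd; case: constructive_indefinite_description => c /=; done. Qed.

Lemma crd_uniq c a : a = \sum_(y <- Y) c y *: y -> {in Y, forall y, c y = crd y a}.
Proof.
move=> Ea y yY; apply/eqP; rewrite -subr_eq0; apply/eqP.
have := proj2 (proj2 Hbas) (fun y => c y - crd y a); apply => //.
rewrite (eq_bigr (fun y => c y *: y - crd y a *: y)) => [|w _]; last by rewrite scalerBl.
by rewrite sumrB -Ea -crdE subrr.
Qed.

Lemma crd_basis w y : w \in Y -> y \in Y -> crd w y = (w == y)%:R.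
Proof.
move=> wY yY; apply/esym; apply: (crd_uniq (c := fun w => (w == y)%:R)) => //.
rewrite (bigD1_seq y) //= ?(proj1 Hbas) // eqxx scale1r big1 ?addr0 // => x /negbTE.
by rewrite eq_sym => ->; rewrite scale0r.
Qed.

Lemma crd_sumZ (k : A -> O) (b : A -> A) y : y \in Y ->
  crd y (\sum_(w <- Y) k w *: b w) = \sum_(w <- Y) k w * crd y (b w).
Proof.
move=> yY; apply/esym; apply: (crd_uniq (c := fun y => \sum_(w <- Y) k w * crd y (b w))) => //.
under eq_bigr => w _ do rewrite [b w]crdE scaler_sumr.
rewrite exchange_big /=; apply: eq_bigr => x _.
by rewrite scaler_suml; apply: eq_bigr => w _; rewrite scalerA.
Qed.

Lemma crdZ k a y : y \in Y -> crd y (k *: a) = k * crd y a.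
Proof.
move=> yY; apply/esym; apply: (crd_uniq (c := fun y => k * crd y a)) => //.
by rewrite [in LHS](crdE a) scaler_sumr; apply: eq_bigr => w _; rewrite scalerA.
Qed.

Lemma crd_perm (l l' r r' : A) a w :
  l' * l = 1 -> r * r' = 1 -> perm_eq [seq l * y * r | y <- Y] Y -> w \in Y ->
  crd (l * w * r) (l * a * r) = crd w a.
Proof.
move=> ll rr pY wY.
have E1 : l * a * r = \sum_(y <- Y) crd y a *: (l * y * r).
  rewrite [in LHS](crdE a) mulr_sumr mulr_suml; apply: eq_bigr => y _.
  by rewrite -scalerAr -scalerAl.
have E2 : l * a * r = \sum_(y <- Y) crd (l * y * r) (l * a * r) *: (l * y * r).
  rewrite {1}(crdE (l * a * r)).
  rewrite -(big_map (fun y => l * y * r) xpredT (fun w => crd w (l * a * r) *: w)).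
  by rewrite (perm_big Y pY).
have E3 : \sum_(y <- Y) (crd y a - crd (l * y * r) (l * a * r)) *: y = 0.
  have : l' * (\sum_(y <- Y) (crd y a - crd (l * y * r) (l * a * r)) *: (l * y * r)) * r' = 0.
    under eq_bigr => y _ do rewrite scalerBl.
    by rewrite sumrB -E1 -E2 subrr mulr0 mul0r.
  move=> H0; rewrite -[RHS]H0 mulr_sumr mulr_suml; apply: eq_bigr => y _.
  by rewrite -scalerAr -scalerAl !mulrA ll mul1r -!mulrA rr mulr1.
have := proj2 (proj2 Hbas) _ E3 w wY; move/eqP; rewrite subr_eq0 => /eqP.
done.
Qed.
End Coord.

Section Ideal.
Variables (O : idomainType).
Hypothesis Hloc : is_local O.
Local Open Scope ring_scope.

Lemma m0 : (0 : O) \in @mO O.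
Proof. by rewrite inE unitr0. Qed.

Lemma mD (x y : O) : x \in @mO O -> y \in @mO O -> x + y \in @mO O.
Proof. exact: (proj1 Hloc). Qed.

Lemma mMl (x y : O) : y \in @mO O -> x * y \in @mO O.
Proof. exact: (proj2 Hloc). Qed.

Lemma mMr (x y : O) : x \in @mO O -> x * y \in @mO O.
Proof. by rewrite mulrC; apply: mMl. Qed.

Lemma mN (x : O) : x \in @mO O -> - x \in @mO O.
Proof. by move=> h; rewrite -mulN1r; apply: mMl. Qed.

Lemma mB (x y : O) : x \in @mO O -> y \in @mO O -> x - y \in @mO O.
Proof. by move=> hx hy; apply: mD => //; apply: mN. Qed.

Lemma msum (I : Type) (r : seq I) (P : pred I) (F : I -> O) :
  (forall i, P i -> F i \in @mO O) -> \sum_(i <- r | P i) F i \in @mO O.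
Proof.
move=> h; elim/big_rec: _ => [|i x Pi hx]; first exact: m0.
by apply: mD => //; apply: h.
Qed.

Lemma mN1 : (-1 : O) \notin @mO O.
Proof. by rewrite inE unitrN1. Qed.

Lemma mprod (I : Type) (r : seq I) (F G : I -> O) :
  (forall i, F i - G i \in @mO O) -> \prod_(i <- r) F i - \prod_(i <- r) G i \in @mO O.
Proof.
move=> h; elim: r => [|i r IH]; first by rewrite !big_nil subrr m0.
rewrite !big_cons.
have -> : F i * \prod_(j <- r) F j - G i * \prod_(j <- r) G j =
  F i * (\prod_(j <- r) F j - \prod_(j <- r) G j) + (F i - G i) * \prod_(j <- r) G j.
  by rewrite mulrBr mulrBl addrA subrK.
by apply: mD; [apply: mMl | apply: mMr].
Qed.

Lemma mdet n (X Z : 'M[O]_n) : (forall i j, X i j - Z i j \in @mO O) ->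
  \det X - \det Z \in @mO O.
Proof.
move=> h; rewrite /determinant -sumrB; apply: msum => s _.
by rewrite -mulrBr; apply: mMl; apply: mprod.
Qed.

Lemma rank_arg n n' (N : 'M[O]_(n, n')) (M : 'M[O]_(n', n)) :
  (forall i j, (N *m M) i j - (i == j)%:R \in @mO O) -> (n <= n')%N.
Proof.
move=> h.
have hd : \det (N *m M) != 0.
  apply/negP => /eqP d0.
  have := mdet (Z := 1%:M) (X := N *m M) _.
  rewrite d0 det1 sub0r => H.
  have : (-1 : O) \in @mO O by apply: H => i j; rewrite [1%:M i j]mxE; exact: h.
  by rewrite (negbTE mN1).
have : \rank (map_mx (@tofrac O) (N *m M)) = n.
  apply: mxrank_unit; rewrite unitmxE det_map_mx unitfE.
  by rewrite tofrac_eq0.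
rewrite map_mxM => <-.
apply: leq_trans (mxrankM_maxr _ _) _; exact: rank_leq_row.
Qed.
End Ideal.

Section Act.
Variables (O : idomainType) (A : algType O) (gT : finGroupType) (S : {group gT}).
Variables (sigma : gT -> A) (Y : seq A).
Hypothesis Hhom : interior_hom S sigma.
Hypothesis Hinv : SS_invariant S sigma Y.
Local Notation T := (seq_sub Y).
Local Open Scope ring_scope.

Lemma sigmaM : {in S &, forall x y, sigma (x * y)%g = sigma x * sigma y}.
Proof. exact: (proj2 Hhom). Qed.

Lemma sigmaVl s : s \in S -> sigma s^-1%g * sigma s = 1.
Proof. by move=> sS; rewrite -sigmaM ?groupV // mulVg (proj1 Hhom). Qed.

Lemma sigmaVr s : s \in S -> sigma s * sigma s^-1%g = 1.
Proof. by move=> sS; rewrite -sigmaM ?groupV // mulgV (proj1 Hhom). Qed.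

Lemma perm3 s t : s \in S -> t \in S ->
  perm_eq [seq sigma s * y * sigma t | y <- Y] Y.
Proof.
move=> sS tS; have [h1 _] := Hinv sS; have [_ h2] := Hinv tS.
rewrite (map_comp (fun y => y * sigma t) (fun y => sigma s * y)).
apply: perm_trans h2; exact: perm_map.
Qed.

Lemma mul3Y s t y : s \in S -> t \in S -> y \in Y -> sigma s * y * sigma t \in Y.
Proof.
move=> sS tS yY; rewrite -(perm_mem (perm3 sS tS)); exact: map_f.
Qed.

Section Alpha.
Variables (Q : {group gT}) (al : gT -> gT).
Hypothesis alM : {in Q &, {morph al : x y / (x * y)%g}}.
Hypothesis alS : {in Q, forall x, al x \in S}.

Lemma al1 : al 1%g = 1%g.
Proof. by apply: (mulgI (al 1%g)); rewrite mulg1 -alM // mulg1. Qed.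

Lemma alV x : x \in Q -> al x^-1%g = (al x)^-1%g.
Proof.
by move=> xQ; apply: (mulgI (al x)); rewrite -alM ?groupV // !mulgV al1.
Qed.

Definition mul3 (g : gT * gT) (a : A) := sigma (al g.1^-1%g) * a * sigma g.2.

Lemma mul3Y' g y : g \in setX Q S -> y \in Y -> mul3 g y \in Y.
Proof.
rewrite inE => /andP[g1 g2] yY; apply: mul3Y => //; apply: alS; exact: groupVr.
Qed.

Definition actf (t : T) (g : gT * gT) : T :=
  if g \in setX Q S then insubd t (mul3 g (val t)) else t.

Lemma val_actf t g : g \in setX Q S -> val (actf t g) = mul3 g (val t).
Proof. by move=> gD; rewrite /actf gD insubdK //; apply: mul3Y' => //; exact: (valP t). Qed.

Lemma mul3K g : g \in setX Q S -> forall a,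
  sigma (al g.1) * mul3 g a * sigma (g.2^-1)%g = a.
Proof.
rewrite inE => /andP[g1 g2] a; rewrite /mul3 alV // !mulrA sigmaVr ?alS //.
by rewrite mul1r -mulrA sigmaVr // mulr1.
Qed.

Lemma actf_is_action : is_action (setX Q S) actf.
Proof.
split.
  move=> g t t'; rewrite /actf; case: ifP => // gD E; apply: val_inj.
  have := congr1 val E; rewrite !insubdK; try (apply: mul3Y' => //; exact: (valP _)).
  by move=> E'; rewrite -(mul3K gD (val t)) -(mul3K gD (val t')) E'.
move=> t g h gD hD; apply: val_inj; rewrite !val_actf ?groupM //.
move: gD hD; rewrite !inE => /andP[g1 g2] /andP[h1 h2].
rewrite /mul3 /= invMg alM ?groupV // sigmaM ?alS ?groupV // sigmaM //.
by rewrite !mulrA.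
Qed.

Definition actA := Action actf_is_action.

Lemma actAE t g : g \in setX Q S -> val (actA t g) = mul3 g (val t).
Proof. exact: val_actf. Qed.
End Alpha.
End Act.

Section MarksLe.
Local Open Scope group_scope.
Variables (O : idomainType) (A : algType O) (gT : finGroupType) (S : {group gT}).
Variables (sigma : gT -> A) (Y : seq A) (p : nat).
Hypothesis Hhom : interior_hom S sigma.
Hypothesis Hinv : SS_invariant S sigma Y.
Hypothesis Hbas : is_basis Y.
Hypothesis Hloc : is_local O.
Hypothesis Hprime : prime p.
Hypothesis HpO : (p%:R : O)%R \in @mO O.
Hypothesis HpS : (p.-group S)%g.
Local Notation T := (seq_sub Y).
Local Open Scope ring_scope.

Section Alpha.
Variables (Q : {group gT}) (al : gT -> gT).
Hypothesis alM : {in Q &, {morph al : x y / (x * y)%g}}.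
Hypothesis alS : {in Q, forall x, al x \in S}.

Lemma crd_mul3 g a w : g \in setX Q S -> w \in Y ->
  crd Hbas (mul3 sigma al g w) (mul3 sigma al g a) = crd Hbas w a.
Proof.
rewrite inE => /andP[g1 g2] wY; apply: (@crd_perm _ _ _ _ _ (sigma (al g.1)) _ (sigma g.2^-1%g)) => //.
- by rewrite (alV alM) // (sigmaVr Hhom) ?alS.
- by rewrite (sigmaVr Hhom).
- by apply: (perm3 Hinv) => //; apply: alS; rewrite groupV.
Qed.
End Alpha.

Lemma sum_classes (C : {set T}) (g : T -> O) :
  (forall v, (#|[set w in C | g w == v]|)%:R \in @mO O) -> \sum_(w in C) g w \in @mO O.
Proof.
move: {2}#|C| (leqnn #|C|) => n; elim: n C => [|n IH] C cC hC.
  by rewrite big_pred0 ?(m0) // => w; move: cC; rewrite leqn0 => /eqP /card0_eq ->.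
have [C0|] := eqVneq C set0; first by rewrite C0 big_set0 m0.
case/set0Pn => w0 w0C.
pose C0 := [set w in C | g w == g w0].
rewrite (big_setID C0) /=.
apply: mD => //.
  rewrite (eq_bigr (fun _ => g w0)); last by move=> w; rewrite !inE => /andP[_ /andP[_ /eqP]].
  rewrite sumr_const -mulr_natr; apply: mMl => //.
  by rewrite (setIidPr _) ?hC //; apply/subsetP => w; rewrite inE => /andP[].
apply: IH.
  rewrite -ltnS; apply: leq_trans cC; rewrite -(cardsID C0 C) addnC -{1}[#|C :\: C0|]addn0 ltn_add2l.
  by apply/card_gt0P; exists w0; rewrite !inE w0C eqxx.
move=> v; have [->|nv] := eqVneq v (g w0).
  rewrite (_ : [set _ in _ | _] = set0) ?cards0 ?m0 //.
  by apply/setP => w; rewrite !inE; case: (w \in C); case: (g w == g w0).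
rewrite (_ : [set _ in _ | _] = [set w in C | g w == v]) ?hC //.
apply/setP => w; rewrite !inE; case E: (g w == v); rewrite ?andbF //.
by rewrite (eqP E) (negbTE nv) /=; case: (w \in C).
Qed.

Lemma pgroup_m (D : {group gT * gT}) (to : action D T) (H : {group gT * gT}) (C : {set T}) :
  p.-group H -> [acts H, on C | to] -> 'Fix_(C | to)(H) = set0 -> (#|C|)%:R \in @mO O.
Proof.
move=> pH aC F0; have := pgroup_fix_mod pH aC; rewrite F0 cards0 mod0n => /eqP.
rewrite -/(dvdn p #|C|) => /dvdnP[k ->]; rewrite natrM; exact: mMl.
Qed.

Section Pair.
Variables (P : {group gT}) (al al' : gT -> gT) (e e' : A).
Hypothesis sPS : P \subset S.
Hypothesis alM : {in P &, {morph al : x y / (x * y)%g}}.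
Hypothesis alS : {in P, forall x, al x \in S}.
Hypothesis al'M : {in P &, {morph al' : x y / (x * y)%g}}.
Hypothesis al'S : {in P, forall x, al' x \in S}.
Hypothesis ee' : e * e' = 1.
Hypothesis e'e : e' * e = 1.
Hypothesis He : {in P, forall x, sigma (al' x) * e = e * sigma (al x)}.

Lemma He' : {in P, forall x, e' * sigma (al' x) = sigma (al x) * e'}.
Proof.
move=> x xP; rewrite -[LHS]mulr1 -ee' mulrA -(mulrA e') He // mulrA e'e mul1r.
by [].
Qed.

Lemma e_mul3 h a : h \in setX P S -> mul3 sigma al' h (e * a) = e * mul3 sigma al h a.
Proof.
rewrite inE => /andP[h1 _]; rewrite /mul3 !mulrA He //; exact: groupVr.
Qed.

Lemma e'_mul3 h a : h \in setX P S -> mul3 sigma al h (e' * a) = e' * mul3 sigma al' h a.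
Proof.
rewrite inE => /andP[h1 _]; rewrite /mul3 !mulrA He' //; exact: groupVr.
Qed.

Local Notation to := (actA Hhom Hinv alM alS).
Local Notation to' := (actA Hhom Hinv al'M al'S).

Lemma pXS : p.-group (setX P S).
Proof. by rewrite /pgroup cardsX pnatM; apply/andP; split; [exact: (pgroupS sPS HpS) | exact: HpS]. Qed.

Lemma marks_le (H : {group gT * gT}) : H \subset setX P S ->
  (#|'Fix_to(H)| <= #|'Fix_to'(H)|)%N.
Proof.
move=> sHD.
have pH : p.-group H := pgroupS sHD pXS.
set F := 'Fix_to(H); set F' := 'Fix_to'(H).
have uY := proj1 Hbas.
have FE z h : z \in F -> h \in H -> mul3 sigma al h (val z) = val z.
  move=> /afixP zF hH; rewrite -(actAE Hhom Hinv alM alS) ?(subsetP sHD) //.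
  by rewrite zF.
have K : forall z z', z \in F -> z' \in F ->
    \sum_(w in F') crd Hbas (val z') (e' * val w) * crd Hbas (val w) (e * val z)
      - (z' == z)%:R \in @mO O.
  move=> z z' zF z'F.
  pose G (w : T) := crd Hbas (val z') (e' * val w) * crd Hbas (val w) (e * val z).
  have Hd : (z' == z)%:R = \sum_(w : T) G w.
    rewrite -val_eqE -(crd_basis Hbas); [|exact: valP|exact: valP].
    rewrite -{1}[val z]mul1r -e'e -mulrA (crdE Hbas (e * val z)) mulr_sumr.
    under eq_bigr => w _ do rewrite -scalerAr.
    rewrite crd_sumZ; last exact: valP.
    rewrite -(sum_seq_sub uY (fun w => crd Hbas w (e * val z) * crd Hbas (val z') (e' * w))).
    by apply: eq_bigr => w _; rewrite mulrC.
  rewrite Hd [X in _ - X](bigID (mem F')) /= /G opprD addrA subrr add0r.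
  apply: (mN Hloc).
  rewrite (eq_bigl (mem (~: F'))); last by move=> w; rewrite !inE.
  apply: sum_classes => v.
  apply: (@pgroup_m _ to' H) => //.
    apply/subsetP => h hH; have hD := subsetP sHD _ hH.
    have := hD; rewrite !inE => /andP[-> ->] /=; apply/subsetP => w; rewrite !inE => /andP[wF /eqP Gw].
    apply/andP; split.
      apply: contra wF => wF'.
      have ew : to' w h = w.
        have := subsetP wF' h^-1%g (groupVr hH); rewrite inE.
        by rewrite (actKin to' hD) => /eqP.
      by rewrite -ew.
    apply/eqP; rewrite -Gw /G !(actAE Hhom Hinv al'M al'S) //.
    have E1 : crd Hbas (val z') (mul3 sigma al h (e' * val w)) = crd Hbas (val z') (e' * val w).
      by rewrite -{1}(FE z' h) // (crd_mul3 alM alS) //; exact: valP.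
    have E2 : crd Hbas (mul3 sigma al' h (val w)) (e * val z) = crd Hbas (val w) (e * val z).
      by rewrite -{1}(FE z h) // -e_mul3 // (crd_mul3 al'M al'S) //; exact: valP.
    by rewrite -e'_mul3 // E1 E2.
  apply/setP => w; rewrite !inE; apply/negP => /andP[/andP[/negP nF _]]; apply: nF.
pose Mx : 'M[O]_(#|F'|, #|F|) :=
  \matrix_(i, j) crd Hbas (val (enum_val i)) (e * val (enum_val j)).
pose Nx : 'M[O]_(#|F|, #|F'|) :=
  \matrix_(i, j) crd Hbas (val (enum_val i)) (e' * val (enum_val j)).
apply: (@rank_arg _ Hloc _ _ Nx Mx) => i j.
rewrite mxE.
have -> : ((i == j) = (enum_val i == enum_val j :> T)).
  by apply/eqP/eqP => [->|/enum_val_inj].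
have := K _ _ (enum_valP j) (enum_valP i).
rewrite big_enum_val.
rewrite (_ : \sum_j0 Nx i j0 * Mx j0 j = \sum_(k < #|F'|) crd Hbas (val (enum_val i))
   (e' * val (enum_val k)) * crd Hbas (val (enum_val k)) (e * val (enum_val j))) //.
by apply: eq_bigr => k _; rewrite !mxE.
Qed.
End Pair.
End MarksLe.

Section Trace.
Variables (O : idomainType) (A : algType O) (gT : finGroupType) (S : {group gT}).
Variables (sigma : gT -> A) (Y : seq A).
Hypothesis Hhom : interior_hom S sigma.
Hypothesis Hinv : SS_invariant S sigma Y.
Hypothesis Hbas : is_basis Y.
Local Notation T := (seq_sub Y).
Local Open Scope ring_scope.
Local Open Scope group_scope.

Lemma idM : {in S &, {morph (@id gT) : x y / (x * y)%g}}. Proof. by []. Qed.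
Lemma idS : {in S, forall x, id x \in S}. Proof. by []. Qed.
Local Notation to := (actA Hhom Hinv idM idS).

Lemma mul3_act2 g a : mul3 sigma id g^-1%g a = act2 sigma g a.
Proof. by case: g => g1 g2; rewrite /mul3 /act2 /= invgK. Qed.

Lemma act2_sum (I : Type) (r : seq I) (P : pred I) (F : I -> A) g :
  act2 sigma g (\sum_(i <- r | P i) F i) = \sum_(i <- r | P i) act2 sigma g (F i).
Proof. by rewrite /act2 mulr_sumr mulr_suml. Qed.

Lemma act2Z g k a : act2 sigma g (k *: a)%R = (k *: act2 sigma g a)%R.
Proof. by rewrite /act2 -scalerAr -scalerAl. Qed.

Variable U : {group gT * gT}.
Hypothesis sUS : U \subset setX S S.

Lemma stabP t u : u \in 'C_U[t | to] -> to t u = t.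
Proof. by rewrite !inE sub1set inE => /and3P[_ _ /eqP]. Qed.

Lemma eq_to t g g' : g \in U -> g' \in U ->
  (to t g == to t g') = ((g * g'^-1)%g \in 'C_U[t | to]).
Proof. by move=> gU g'U; rewrite (@act_eq_stab _ _ _ U sUS to t g g'). Qed.

Lemma orbit_sum t :
  \sum_(C in lcosets 'C_U[t | to] U) act2 sigma (repr C) (val t) =
  \sum_(w in orbit to U t) val w.
Proof.
set V := 'C_U[t | to].
have sVU : V \subset U by apply: subsetIl.
have Hrep : forall C, C \in lcosets V U -> [/\ repr C \in U, repr C \in C & C = repr C *: V].
  move=> C /lcosetsP[x xU ->].
  have rC : repr (x *: V) \in x *: V by apply: (mem_repr x); exact: (lcoset_refl ('C_U[t | to])%G x).
  split => //; last by apply/esym/lcoset_eqP.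
  by case/lcosetP: rC => v vV ->; rewrite groupM // (subsetP sVU).
pose phi C := to t (repr C)^-1.
have E1 : forall C, C \in lcosets V U -> act2 sigma (repr C) (val t) = val (phi C).
  move=> C /Hrep[rU _ _]; rewrite /phi (actAE Hhom Hinv idM idS) ?mul3_act2 //.
  by rewrite groupV (subsetP sUS).
rewrite (eq_bigr _ E1) -big_imset /=.
  apply: eq_bigl => w; apply/idP/idP.
    case/imsetP => C /Hrep[rU _ _] ->; rewrite /phi mem_orbit // groupV //.
  case/imsetP => u uU ->; apply/imsetP; exists (u^-1 *: V).
    by apply/lcosetsP; exists u^-1; rewrite ?groupV.
  have /Hrep[rU rC _] : u^-1 *: V \in lcosets V U by apply/lcosetsP; exists u^-1; rewrite ?groupV.
  apply/eqP; rewrite /phi eq_to ?groupV //.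
  by case/lcosetP: rC => v vV ->; rewrite invgK mulgA mulgV mul1g.
move=> C1 C2 /Hrep[r1U _ E1'] /Hrep[r2U _ E2'] /eqP; rewrite /phi eq_to ?groupV // invgK => H12.
rewrite E1' E2'; apply/lcoset_eqP; rewrite mem_lcoset.
by rewrite -(groupV V) invMg invgK.
Qed.

Lemma exists_fixed : brauer_nz sigma U -> exists2 y, y \in Y & fixedby sigma U y.
Proof.
case=> a [aF naK].
case: (boolP (has (fun y => [forall u in U, act2 sigma u y == y]) Y)) => [/hasP[y yY /forallP Hy]|nohas].
  exists y => // u uU; have := Hy u; rewrite uU => /eqP; exact.
exfalso; apply: naK.
have uD u : u \in U -> u \in setX S S by move/(subsetP sUS).
have nofix t : t \notin 'Fix_to(U).
  apply/negP => /afixP tF; move/hasPn: nohas => /(_ _ (valP t)) /forallP; apply => u.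
  apply/implyP => uU; apply/eqP.
  by rewrite -mul3_act2 -(actAE Hhom Hinv idM idS) ?tF ?groupV ?uD.
have stab_proper t : 'C_U[t | to] \proper U.
  rewrite properEneq subsetIl andbT; apply/negP => /eqP E; apply: (negP (nofix t)).
  by apply/afixP => u; rewrite -E => /stabP.
pose rep t := odflt t [pick w in orbit to U t].
have rep_orbit t : rep t \in orbit to U t.
  by rewrite /rep; case: pickP => [w -> //|/(_ t)]; rewrite orbit_refl.
have sUD : U \subset setX S S := sUS.
have rep_eq t t' : t' \in orbit to U t -> rep t' = rep t.
  move=> tt'; rewrite /rep.
  have -> : orbit to U t' = orbit to U t by apply/orbit_in_eqP.
  by case: pickP => // /(_ t); rewrite orbit_refl.
have rep_idem t : rep (rep t) = rep t by apply: rep_eq.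
have mem_rep t w : rep t = t -> (rep w == t) = (w \in orbit to U t).
  move=> rt; apply/eqP/idP => [<-|wo]; last by rewrite (rep_eq _ _ wo).
  by rewrite orbit_in_sym //.
pose c (t : T) := crd Hbas (val t) a.
have c_inv t u : u \in U -> c (to t u) = c t.
  move=> uU; rewrite /c (actAE Hhom Hinv idM idS) ?uD //.
  have {1}-> : a = mul3 sigma id u a by rewrite -[u]invgK mul3_act2 aF ?groupV.
  by rewrite (crd_mul3 Hhom Hinv Hbas idM idS) ?uD //; exact: valP.
pose stabG t := ('C_U[t | to])%G.
pose b (V : {group gT * gT}) := \sum_(t | (rep t == t) && (stabG t == V)) (c t *: val t)%R.
exists [::], b; split.
- by [].
- move=> V _ u uV; rewrite /b act2_sum; apply: eq_bigr => t /andP[_ /eqP E].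
  rewrite act2Z; congr (_ *: _)%R.
  have uS : u^-1 \in 'C_U[t | to] by rewrite groupV; move: uV; rewrite -E.
  by rewrite -mul3_act2 -(actAE Hhom Hinv idM idS) ?stabP // uD // (subsetP (subsetIl _ _) _ uS).
rewrite big_nil add0r.
have Etr (V : {group gT * gT}) : V \proper U -> trace sigma V U (b V) =
    \sum_(t | (rep t == t) && (stabG t == V)) (c t *: \sum_(w in orbit to U t) val w)%R.
  move=> _; rewrite /trace /b.
  under eq_bigr => C _ do rewrite act2_sum.
  rewrite exchange_big /=; apply: eq_bigr => t /andP[_ /eqP E].
  rewrite -orbit_sum -E /= scaler_sumr; apply: eq_bigr => C _; exact: act2Z.
rewrite (eq_bigr _ Etr) -(partition_big _ _ (fun t _ => stab_proper t)) /=.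
rewrite [LHS](crdE Hbas a) -(sum_seq_sub (proj1 Hbas) (fun y => crd Hbas y a *: y)%R).
rewrite (partition_big rep (fun t => rep t == t)) //=.
apply: eq_bigr => t /eqP rt; rewrite scaler_sumr.
rewrite (eq_bigl (fun w => w \in orbit to U t)); last by move=> w; rewrite mem_rep.
  apply: eq_bigr => w /imsetP[u uU ->]; by rewrite -(c_inv t u uU).
by move=> i _; rewrite rep_idem.
Qed.
End Trace.


Unset Implicit Arguments. Set Strict Implicit.
Local Open Scope ring_scope.

Theorem proposition4p2 (O : idomainType) (p : nat) (A : algType O)
  (gT : finGroupType) (S : {group gT}) (sigma : gT -> A) (Y : seq A) :
  standing_O O p ->
  (p.-group S)%g ->
  interior_hom S sigma ->
  is_basis Y -> SS_invariant S sigma Y -> (forall y, y \in Y -> isunitA y) ->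
  divisible S sigma ->
  forall (P : {group gT}) (f : gT -> gT),
    P \subset S -> Fhom sigma P S f ->
    exists beta : A -> A,
      [/\ (forall y, y \in Y -> beta y \in Y),
          {in Y &, injective beta} &
          (forall x s y, x \in P -> s \in S -> y \in Y ->
             beta (sigma (f x) * y * sigma s) = sigma x * beta y * sigma s)].
Proof.
case=> Hloc _ _ _ [Hprime HpO] HpS Hhom Hbas Hinv Hunit _ P f sPS [fM finj fPS Hnz].
have fS : {in P, forall x, f x \in S}.
  by move=> x xP; apply: (subsetP fPS); apply: imset_f.
have idMP : {in P &, {morph (@id gT) : x y / (x * y)%g}} by [].
have idSP : {in P, forall x, id x \in S} by move=> x xP; apply: (subsetP sPS).
have gD : group_set (Delta f P).
  apply/group_setP; split.
    apply/imsetP; exists 1%g => //; by rewrite (al1 fM).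
  move=> _ _ /imsetP[x xP ->] /imsetP[y yP ->]; apply/imsetP; exists (x * y)%g.
    by rewrite groupM.
  by rewrite fM.
pose U := Group gD.
have sUS : U \subset setX S S.
  apply/subsetP => _ /imsetP[x xP ->]; rewrite inE /= fS //=; exact: (subsetP sPS).
have [y0 y0Y y0F] := exists_fixed Hhom Hinv Hbas sUS Hnz.
have [e' [ee' e'e]] := Hunit y0 y0Y.
have He : {in P, forall x, sigma (f x) * y0 = y0 * sigma (id x)}.
  move=> x xP; have xS := subsetP sPS x xP.
  have := y0F (f x, x) (imset_f _ xP); rewrite /act2 /= => E.
  by rewrite -{2}E -mulrA (sigmaVl Hhom) // mulr1.
have He2 : {in P, forall x, sigma (id x) * e' = e' * sigma (f x)}.
  by move=> x xP; rewrite (He' ee' e'e He).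
pose G := setX_group P S.
have Hm : forall H : {group gT * gT}, H \subset G ->
    (#|'Fix_(actA Hhom Hinv idMP idSP)(H)| = #|'Fix_(actA Hhom Hinv fM fS)(H)|)%g.
  move=> H sHG; apply/eqP; rewrite eqn_leq.
  rewrite (marks_le Hhom Hinv Hbas Hloc HpO HpS sPS idMP idSP fM fS ee' e'e He) //.
  by rewrite (marks_le Hhom Hinv Hbas Hloc HpO HpS sPS fM fS idMP idSP e'e ee' He2).
have [beta [binj bE]] := marks_iso (subxx G) Hm.
exists (fun a => if insub a is Some t then val (beta t) else a); split.
- move=> y yY; rewrite insubT /=; exact: valP.
- move=> y y' yY y'Y; rewrite !insubT /= => /val_inj /binj.
  by move/(congr1 val).
move=> x s y xP sS yY.
have gG : (x^-1, s)%g \in G by rewrite inE /= groupV xP.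
have E2 : sigma (f x) * y * sigma s = val (actA Hhom Hinv fM fS (SeqSub yY) (x^-1, s)%g).
  by rewrite (actAE Hhom Hinv fM fS) // /mul3 /= invgK.
have E3 : insub y = Some (SeqSub yY) by rewrite insubT; congr Some; apply: val_inj.
by rewrite E2 valK bE // (actAE Hhom Hinv idMP idSP) // /mul3 /= invgK E3.
Qed.
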